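(* Let $\mathbb{I}>0$, $\xi>0$, and for $\ell>0$ let $g_\xi(\ell)=4\ell^2\int_0^\infty u^2\,\Phi\big(-\frac{u\ell\xi\sqrt{\mathbb{I}}}{2}\big)\phi(u)\,du$. Then $g_\xi$ is maximized at $\ell_{opt}=\frac{2.426}{\xi\sqrt{\mathbb{I}}}$ (constant to three decimals), and $$\alpha_{opt}=4\int_0^\infty\Phi\Big(-\frac{u\ell_{opt}\xi\sqrt{\mathbb{I}}}{2}\Big)\phi(u)\,du=0.439$$ up to three decimal places.
   Context: $\Phi,\phi$ are the standard normal cdf and density. $g_\xi$ is the diffusion speed of the limiting diffusion of additive TMCMC for independent, non-identically scaled targets $\prod_j\theta_j(d)f(\theta_j(d)x_j)$, where $\mathbb{I}=E_f[(f'/f)^2]$ and $\xi$ is a limiting constant determined by the scalings. *)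

(* Defs.v *)
From Stdlib Require Import Reals.
From Coquelicot Require Import Coquelicot.
Open Scope R_scope.

Definition phi (x : R) : R := exp (- x ^ 2 / 2) / sqrt (2 * PI).

Definition Phi (x : R) : R := RInt_gen phi (Rbar_locally m_infty) (at_point x).

Definition g_speed (I xi l : R) : R :=
  4 * l ^ 2 * RInt_gen (fun u => u ^ 2 * Phi (- (u * l * xi * sqrt I) / 2) * phi u)
                       (at_point 0) (Rbar_locally p_infty).

Definition alpha_acc (I xi l : R) : R :=
  4 * RInt_gen (fun u => Phi (- (u * l * xi * sqrt I) / 2) * phi u)
               (at_point 0) (Rbar_locally p_infty).

Definition is_max_speed (I xi l : R) : Prop :=
  0 < l /\ forall l', 0 < l' -> g_speed I xi l' <= g_speed I xi l.

(* Main.v *)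
Require Import Defs.
From Stdlib Require Import Reals Lra Lia Psatz.
From Coquelicot Require Import Coquelicot.
Open Scope R_scope.

Fixpoint atS (n : nat) (x : R) : R :=
  match n with O => x | S m => atS m x + (-1)^n * x^(2*n+1) / INR (2*n+1) end.
Fixpoint geo (n : nat) (x : R) : R :=
  match n with O => 1 | S m => geo m x + (-1)^n * x^(2*n) end.

Lemma mono_der (c : R) (k : nat) x :
  is_derive (fun x => c * x^(S k) / INR (S k)) x (c * x^k).
Proof.
  auto_derive. easy. rewrite <- S_INR. destruct k; [simpl; field|]. field. apply not_0_INR. lia.
Qed.

Lemma atS_der n x : is_derive (atS n) x (geo n x).
Proof.
  induction n as [|n IH].
  - simpl. auto_derive. easy. ring.
  - change (geo (S n) x) with (geo n x + (-1)^(S n) * x^(2 * S n)).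
    apply (is_derive_plus (atS n) (fun x => (-1)^(S n) * x ^ (2 * S n + 1) / INR (2 * S n + 1))); auto.
    replace (2 * S n + 1)%nat with (S (2 * S n)) by lia. apply mono_der.
Qed.

Lemma geo_closed n x : (1 + x^2) * geo n x = 1 - (-1)^(S n) * x^(2 * S n).
Proof.
  induction n as [|n IH].
  - simpl. ring.
  - change (geo (S n) x) with (geo n x + (-1)^(S n) * x^(2 * S n)).
    rewrite Rmult_plus_distr_l, IH.
    replace (2 * S (S n))%nat with (2 * S n + 2)%nat by lia.
    rewrite pow_add. change ((-1)^(S (S n))) with ((-1) * (-1)^(S n)). ring.
Qed.

Lemma is_derive_eq (f g : R -> R) x l l' :
  is_derive f x l -> (forall t, f t = g t) -> l = l' -> is_derive g x l'.
Proof. intros H E E'. subst l'. eapply is_derive_ext; eauto. Qed.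

Lemma atS_0 n : atS n 0 = 0.
Proof.
  induction n as [|n IH]. reflexivity.
  change (atS (S n) 0) with (atS n 0 + (-1)^(S n) * 0^(2 * S n + 1) / INR (2 * S n + 1)).
  rewrite IH, pow_i by lia. unfold Rdiv. ring.
Qed.

Lemma m1_sq n : (-1)^n * (-1)^n = 1.
Proof. rewrite <- Rpow_mult_distr. replace (-1 * -1) with 1 by ring. apply pow1. Qed.

Lemma atan_atS_diff n x : 0 <= x ->
  0 <= (-1)^n * (atS n x - atan x).
Proof.
  intros Hx.
  set (D := fun t => (-1)^n * (atS n t - atan t)).
  assert (HD : forall t, is_derive D t ((-1)^n * (geo n t - / (1 + t^2)))).
  { intros t. unfold D.
    assert (H2 : is_derive atan t (/ (1 + t^2))).
    { replace (t^2) with (t²) by (unfold Rsqr; ring). apply is_derive_atan. }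
    pose proof (is_derive_scal _ t ((-1)^n) _ (is_derive_minus _ _ _ _ _ (atS_der n t) H2)) as H3.
    eapply is_derive_eq; [apply H3| |]; intros; simpl; unfold minus, plus, opp; simpl; ring. }
  destruct (MVT_gen D 0 x (fun t => (-1)^n * (geo n t - / (1 + t^2)))) as [c [Hc E]].
  - intros; apply HD.
  - intros y _. apply continuity_pt_filterlim. apply (ex_derive_continuous D). eexists; apply HD.
  - change (0 <= D x).
    assert (D0 : D 0 = 0).
    { unfold D. rewrite atan_0, atS_0. ring. }
    assert (Hpos : 0 <= (-1)^n * (geo n c - / (1 + c^2))).
    { assert (H1 : 0 < 1 + c^2) by (pose proof (pow2_ge_0 c); lra).
      assert (G := geo_closed n c).
      replace (geo n c) with ((1 - (-1)^(S n) * c^(2 * S n)) / (1 + c^2))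
        by (rewrite <- G; field; lra).
      change ((-1)^(S n)) with (-1 * (-1)^n).
      replace ((-1) ^ n * ((1 - -1 * (-1) ^ n * c ^ (2 * S n)) / (1 + c ^ 2) - / (1 + c ^ 2)))
        with (((-1)^n * (-1)^n) * c^(2 * S n) / (1 + c^2)) by (field; lra).
      rewrite m1_sq. rewrite pow_mult. apply Rmult_le_pos. rewrite Rmult_1_l.
      apply pow_le. apply pow2_ge_0. left; apply Rinv_0_lt_compat; lra. }
    rewrite Rmin_left, Rmax_right in Hc by lra.
    assert (D x = D 0 + (-1)^n * (geo n c - / (1 + c^2)) * (x - 0)) by lra.
    rewrite H, D0. apply Rplus_le_le_0_compat. lra. apply Rmult_le_pos; lra.
Qed.

Lemma atan_up k x : 0 <= x -> atan x <= atS (2 * k) x.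
Proof.
  intros Hx. pose proof (atan_atS_diff (2 * k) x Hx).
  rewrite pow_mult in H. replace ((-1)^2) with 1 in H by ring. rewrite pow1 in H. lra.
Qed.

Lemma atan_lo k x : 0 <= x -> atS (2 * k + 1) x <= atan x.
Proof.
  intros Hx. pose proof (atan_atS_diff (2 * k + 1) x Hx).
  rewrite pow_add, pow_mult in H. replace ((-1)^2) with 1 in H by ring. rewrite pow1 in H. lra.
Qed.


Lemma atan_red x : 0 <= x <= 1 -> atan x = atan (/2) + atan ((x - /2) / (1 + x * /2)).
Proof.
  intros Hx. apply atan_sub_correct.
  - nra.
  - apply tech; lra.
  - apply atan_bound.
Qed.

Lemma PI_lo : 314 / 100 <= PI.
Proof.
  assert (H := Machin_2_3).
  pose proof (atan_lo 3 (/2)). pose proof (atan_lo 3 (/3)).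
  simpl in H0, H1. lra.
Qed.

Lemma PI_hi : PI <= 3142 / 1000.
Proof.
  assert (H := Machin_2_3).
  pose proof (atan_up 2 (/2)). pose proof (atan_up 2 (/3)).
  simpl in H0, H1. lra.
Qed.

Definition xh := 10303 / 12500.
Definition xl := 1649 / 2000.

Lemma mu_xh : atan xh - xh / (1 + xh^2) - xh^3 / (1 + xh^2)^2 < 0.
Proof.
  rewrite (atan_red xh) by (unfold xh; lra).
  pose proof (atan_up 4 (/2) ltac:(lra)).
  pose proof (atan_up 2 ((xh - /2) / (1 + xh * /2)) ltac:(unfold xh; lra)).
  unfold xh in *. simpl in H, H0. lra.
Qed.

Lemma mu_xl : 0 < atan xl - xl / (1 + xl^2) - xl^3 / (1 + xl^2)^2.
Proof.
  rewrite (atan_red xl) by (unfold xl; lra).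
  pose proof (atan_lo 3 (/2) ltac:(lra)).
  pose proof (atan_lo 1 ((xl - /2) / (1 + xl * /2)) ltac:(unfold xl; lra)).
  unfold xl in *. simpl in H, H0. lra.
Qed.

Lemma atan_xh_lo : 689347 / 1000000 <= atan xh.
Proof.
  rewrite (atan_red xh) by (unfold xh; lra).
  pose proof (atan_lo 3 (/2) ltac:(lra)).
  pose proof (atan_lo 1 ((xh - /2) / (1 + xh * /2)) ltac:(unfold xh; lra)).
  unfold xh in *. simpl in H, H0. lra.
Qed.

Lemma atan_xl_hi : atan xl <= 689503 / 1000000.
Proof.
  rewrite (atan_red xl) by (unfold xl; lra).
  pose proof (atan_up 4 (/2) ltac:(lra)).
  pose proof (atan_up 2 ((xl - /2) / (1 + xl * /2)) ltac:(unfold xl; lra)).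
  unfold xl in *. simpl in H, H0. lra.
Qed.


Lemma exp_le x y : x <= y -> exp x <= exp y.
Proof. intros [H|H]. left; apply exp_increasing; auto. subst; lra. Qed.

Lemma sqrt2PI_pos : 0 < sqrt (2 * PI).
Proof. apply sqrt_lt_R0. pose proof PI_RGT_0. lra. Qed.

Lemma sqrt2PI_ge2 : 2 <= sqrt (2 * PI).
Proof.
  replace 2 with (sqrt 4) at 1. apply sqrt_le_1_alt. pose proof PI2_3_2. lra.
  replace 4 with (2 * 2) by ring. apply sqrt_square. lra.
Qed.

Lemma sqrt2PI_sq : sqrt (2 * PI) * sqrt (2 * PI) = 2 * PI.
Proof. apply sqrt_sqrt. pose proof PI_RGT_0. lra. Qed.

Lemma phi_pos x : 0 < phi x.
Proof. unfold phi. apply Rdiv_lt_0_compat. apply exp_pos. apply sqrt2PI_pos. Qed.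

Lemma phi_cont x : continuous phi x.
Proof.
  apply (ex_derive_continuous phi). unfold phi. auto_derive. pose proof sqrt2PI_pos. lra.
Qed.

Lemma phi_le1 x : phi x <= 1.
Proof.
  unfold phi. pose proof sqrt2PI_ge2. pose proof sqrt2PI_pos.
  assert (exp (- x^2/2) <= 1). { rewrite <- exp_0. apply exp_le; nra. }
  apply Rle_div_l; lra.
Qed.

Lemma exp_half_le : exp (1/2) <= sqrt (2 * PI).
Proof.
  assert (E : exp (1/2) * exp (1/2) = exp 1) by (rewrite <- exp_plus; f_equal; field).
  rewrite <- (sqrt_square (exp (1/2))) by (left; apply exp_pos).
  apply sqrt_le_1_alt. rewrite E. pose proof exp_le_3. pose proof PI2_3_2. lra.
Qed.

Lemma phi_le_exp t : phi t <= exp t.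
Proof.
  unfold phi. pose proof sqrt2PI_pos. pose proof exp_half_le.
  assert (exp (- t^2/2) <= exp t * exp (1/2)).
  { rewrite <- exp_plus. apply exp_le. pose proof (pow2_ge_0 (t+1)). nra. }
  apply Rle_div_l. lra. pose proof (exp_pos t). nra.
Qed.

Lemma u2phi_le1 u : u^2 * phi u <= 1.
Proof.
  unfold phi. pose proof sqrt2PI_ge2. pose proof sqrt2PI_pos.
  pose proof (exp_ineq1_le (u^2/2)).
  assert (E : exp (- u^2/2) * exp (u^2/2) = 1) by (rewrite <- exp_plus; replace (- u^2/2 + u^2/2) with 0 by field; apply exp_0).
  pose proof (exp_pos (- u^2/2)). pose proof (pow2_ge_0 u).
  assert (0 <= exp (- u^2/2) * (exp (u^2/2) - 1 - u^2/2)) by (apply Rmult_le_pos; lra).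
  assert (u^2 * exp (- u^2/2) <= 2) by nra.
  replace (u ^ 2 * (exp (- u ^ 2 / 2) / sqrt (2 * PI))) with (u ^ 2 * exp (- u ^ 2 / 2) / sqrt (2 * PI)) by (unfold Rdiv; ring).
  apply Rle_div_l; lra.
Qed.

Lemma phi_prod a u : phi (- (a * u)) * phi u = exp (- (1 + a^2) * u^2 / 2) / (2 * PI).
Proof.
  unfold phi. pose proof sqrt2PI_pos.
  replace (- (1 + a^2) * u^2 / 2) with (- (- (a*u))^2/2 + - u^2/2) by field.
  rewrite exp_plus.
  transitivity (exp (- (- (a * u)) ^ 2 / 2) * exp (- u ^ 2 / 2) / (sqrt (2 * PI) * sqrt (2 * PI))).
  field. lra. rewrite sqrt2PI_sq. reflexivity.
Qed.

Lemma RInt_correctR (f : R -> R) a b : ex_RInt f a b -> is_RInt f a b (RInt f a b).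
Proof. apply (@RInt_correct R_CompleteNormedModule). Qed.
Lemma is_RInt_uniqueR (f : R -> R) a b l : is_RInt f a b l -> RInt f a b = l.
Proof. apply (@is_RInt_unique R_CompleteNormedModule). Qed.
Lemma ex_RInt_contR (f : R -> R) a b :
  (forall z, Rmin a b <= z <= Rmax a b -> continuous f z) -> ex_RInt f a b.
Proof. apply (@ex_RInt_continuous R_CompleteNormedModule). Qed.

Lemma ballR (x e y : R) : Rabs (y - x) < e -> ball x e y.
Proof. intros H. apply H. Qed.

Lemma phi_exRInt a b : ex_RInt phi a b.
Proof. apply ex_RInt_contR. intros; apply phi_cont. Qed.

Lemma exp_RInt a b : RInt exp a b = exp b - exp a.
Proof.
  apply is_RInt_uniqueR. apply (is_RInt_derive exp exp).
  intros; apply is_derive_exp. intros; apply continuous_exp.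
Qed.

Lemma RInt_phi_bound a b : a <= b -> 0 <= RInt phi a b <= exp b - exp a.
Proof.
  intros Hab. split.
  - apply RInt_ge_0; auto. apply phi_exRInt. intros; left; apply phi_pos.
  - rewrite <- exp_RInt. apply RInt_le; auto. apply phi_exRInt.
    apply ex_RInt_contR. intros; apply continuous_exp.
    intros; apply phi_le_exp.
Qed.

Lemma Phi_ex x : ex_RInt_gen phi (Rbar_locally m_infty) (at_point x).
Proof.
  unfold ex_RInt_gen, is_RInt_gen.
  apply (@filterlimi_locally_cauchy (R * R) R_CompleteSpace
           (filter_prod (Rbar_locally m_infty) (at_point x)) _).
  - apply filter_forall. intros ab. split.
    + exists (RInt phi (fst ab) (snd ab)). apply RInt_correctR, phi_exRInt.
    + intros y1 y2 H1 H2. apply is_RInt_uniqueR in H1. apply is_RInt_uniqueR in H2. congruence.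
  - intros eps.
    exists (fun ab => fst ab < ln eps /\ snd ab = x). split.
    + apply (Filter_prod _ _ _ (fun a => a < ln eps) (fun b => b = x)).
      * exists (ln eps). auto.
      * reflexivity.
      * simpl. auto.
    + intros [a1 b1] [a2 b2] [H1 E1] [H2 E2] u' v' Hu Hv. simpl in *. subst.
      apply is_RInt_uniqueR in Hu. apply is_RInt_uniqueR in Hv. subst.
      apply ballR.
      assert (C : RInt phi a2 x - RInt phi a1 x = RInt phi a2 a1).
      { rewrite <- (RInt_Chasles phi a2 a1 x) by apply phi_exRInt.
        unfold plus; simpl. ring. }
      rewrite C. pose proof (cond_pos eps).
      assert (exp (ln eps) = eps) by (apply exp_ln; auto).
      destruct (Rle_dec a2 a1).
      * pose proof (RInt_phi_bound a2 a1 r). pose proof (exp_increasing _ _ H1).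
        pose proof (exp_pos a2). rewrite Rabs_pos_eq; lra.
      * rewrite <- (opp_RInt_swap phi a1 a2) by apply phi_exRInt.
        pose proof (RInt_phi_bound a1 a2 ltac:(lra)). pose proof (exp_increasing _ _ H2).
        pose proof (exp_pos a1). unfold opp; simpl. rewrite Rabs_Ropp, Rabs_pos_eq; lra.
Qed.

Lemma Phi_is x : is_RInt_gen phi (Rbar_locally m_infty) (at_point x) (Phi x).
Proof. unfold Phi. apply (@RInt_gen_correct R_CompleteNormedModule); try apply _. apply Phi_ex. Qed.

Lemma Phi_decomp x : Phi x = Phi 0 + RInt phi 0 x.
Proof.
  assert (H : is_RInt_gen phi (Rbar_locally m_infty) (at_point x) (plus (Phi 0) (RInt phi 0 x))).
  { apply (is_RInt_gen_Chasles phi 0). apply Phi_is.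
    apply is_RInt_gen_at_point. apply RInt_correctR, phi_exRInt. }
  unfold Phi at 1. apply (@is_RInt_gen_unique R_CompleteNormedModule) in H; try apply _.
  rewrite H. reflexivity.
Qed.

Lemma exp_is_gen x : is_RInt_gen exp (Rbar_locally m_infty) (at_point x) (exp x).
Proof.
  replace (exp x) with (exp x - 0) by ring.
  apply (is_RInt_gen_ext (Derive exp)).
  - apply filter_forall. intros ab t _. apply is_derive_unique, is_derive_exp.
  - apply is_RInt_gen_Derive.
    + apply filter_forall. intros ab t _. exists (exp t). apply is_derive_exp.
    + apply filter_forall. intros ab t _.
      apply (continuous_ext exp). intros; symmetry; apply is_derive_unique, is_derive_exp.
      apply continuous_exp.
    + apply is_lim_exp_m.
    + intros P HP. exact (locally_singleton _ _ HP).
Qed.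

Lemma Phi_abs x : Rabs (Phi x) <= exp x.
Proof.
  apply (@RInt_gen_norm R_CompleteNormedModule (Rbar_locally m_infty) (at_point x) _ _ phi exp (Phi x) (exp x)).
  - apply (Filter_prod _ _ _ (fun a => a < x) (fun b => b = x)).
    exists x; auto. reflexivity. simpl; intros; subst; lra.
  - apply (Filter_prod _ _ _ (fun a => a < x) (fun b => b = x)).
    exists x; auto. reflexivity. simpl; intros.
    unfold norm; simpl. unfold abs; simpl. rewrite Rabs_pos_eq. apply phi_le_exp. left; apply phi_pos.
  - apply Phi_is.
  - apply exp_is_gen.
Qed.

Lemma Phi_der x : is_derive Phi x (phi x).
Proof.
  apply (is_derive_ext (fun y => Phi 0 + RInt phi 0 y)).
  - intros; symmetry; apply Phi_decomp.
  - replace (phi x) with (0 + phi x) by ring.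
    apply (is_derive_plus (fun _ => Phi 0) (fun y => RInt phi 0 y)).
    exact (@is_derive_const R_AbsRing R_NormedModule (Phi 0) x).
    apply (is_derive_RInt phi (fun y => RInt phi 0 y) 0 x).
    apply filter_forall. intros; apply RInt_correctR, phi_exRInt.
    apply phi_cont.
Qed.

Lemma Phi_cont x : continuous Phi x.
Proof. apply (@ex_derive_continuous R_AbsRing R_NormedModule). eexists; apply Phi_der. Qed.

Lemma contR_mult (f g : R -> R) x : continuous f x -> continuous g x ->
  continuous (fun t => f t * g t) x.
Proof. intros Hf Hg. apply (@continuous_mult R_UniformSpace R_AbsRing f g x Hf Hg). Qed.

Ltac toR := match goal with |- ?a = ?b => change (@eq R a b) end.

Ltac fsimpl := toR; simpl; unfold Rdiv; field; repeat split; try (intro; nra); try lra.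

Ltac sidec := repeat split; try easy; try (intro; nra).

Ltac c2d := repeat first [apply continuity_2d_pt_mult | apply continuity_2d_pt_plus
  | apply continuity_2d_pt_opp | apply continuity_2d_pt_id1 | apply continuity_2d_pt_id2
  | apply continuity_2d_pt_const].

Definition Ef (w : R -> R) (a u : R) := - (w u * u) * exp (- (1 + a^2) * u^2 / 2) / (2 * PI).

Lemma f_der (w : R -> R) u z :
  is_derive (fun z => w u * Phi (- (z * u)) * phi u) z (Ef w z u).
Proof.
  assert (H1 : is_derive (fun z => - (z * u)) z (- u)) by (auto_derive; [easy|ring]).
  pose proof (is_derive_comp Phi (fun z => - (z * u)) z _ _ (Phi_der _) H1) as H2.
  pose proof (is_derive_scal _ z (w u * phi u) _ H2) as H3.
  eapply is_derive_eq; [apply H3| |].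
  - intros t; simpl; ring.
  - unfold Ef. change (scal (- u) (phi (- (z * u)))) with (- u * phi (- (z * u))).
    replace (w u * phi u * (- u * phi (- (z * u)))) with (- (w u * u) * (phi (- (z * u)) * phi u)) by ring.
    rewrite phi_prod. unfold Rdiv. symmetry; apply Rmult_assoc.
Qed.

Lemma Ef_cont (w : R -> R) (Hw : forall x y, continuity_2d_pt (fun _ v => w v) x y) x y :
  continuity_2d_pt (Ef w) x y.
Proof.
  unfold Ef. unfold Rdiv.
  apply continuity_2d_pt_mult; [|apply continuity_2d_pt_const].
  apply continuity_2d_pt_mult.
  - apply continuity_2d_pt_opp. apply continuity_2d_pt_mult. apply Hw. apply continuity_2d_pt_id2.
  - apply (continuity_1d_2d_pt_comp exp (fun a u => - (1 + a ^ 2) * u ^ 2 * / 2)).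
    apply derivable_continuous_pt, derivable_pt_exp.
    apply (continuity_2d_pt_ext (fun a u => - (1 + a * a) * (u * u) * / 2)).
    intros; ring. c2d.
Qed.

Lemma Aparam_der (w : R -> R) (Hw : forall x y, continuity_2d_pt (fun _ v => w v) x y)
  (Hw1 : forall x, continuous w x) B a :
  is_derive (fun a => RInt (fun u => w u * Phi (- (a * u)) * phi u) 0 B) a
    (RInt (fun u => Ef w a u) 0 B).
Proof.
  assert (E : forall a u, Derive (fun z => w u * Phi (- (z * u)) * phi u) a = Ef w a u).
  { intros; apply is_derive_unique, f_der. }
  rewrite <- (RInt_ext (fun u => Derive (fun z => w u * Phi (- (z * u)) * phi u) a)).
  2: { intros; apply E. }
  apply (is_derive_RInt_param (fun a u => w u * Phi (- (a * u)) * phi u)).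
  - apply filter_forall. intros z t _. eexists. apply f_der.
  - intros t _. apply (continuity_2d_pt_ext (Ef w)). intros; symmetry; apply E.
    apply Ef_cont; auto.
  - apply filter_forall. intros y. apply ex_RInt_contR. intros z _.
    apply contR_mult.
    apply contR_mult. apply Hw1.
    apply (continuous_comp (fun z => - (y * z)) Phi).
    apply (@ex_derive_continuous R_AbsRing R_NormedModule). auto_derive. easy.
    apply Phi_cont. apply phi_cont.
Qed.

Lemma contR_of_der (f df : R -> R) x : (forall t, is_derive f t (df t)) -> continuous f x.
Proof. intros H. apply (@ex_derive_continuous R_AbsRing R_NormedModule). eexists; apply H. Qed.

Lemma RInt_FTC (F f : R -> R) a b : (forall t, is_derive F t (f t)) -> (forall t, continuous f t) ->
  RInt f a b = F b - F a.
Proof.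
  intros H1 H2. apply is_RInt_uniqueR. apply (is_RInt_derive F f); auto.
Qed.

Lemma PI_pos2 : 0 < 2 * PI.
Proof. pose proof PI_RGT_0; lra. Qed.

Lemma Ef_cont1 (w : R -> R) (Hw : forall x, continuous w x) a t : continuous (Ef w a) t.
Proof.
  unfold Ef. unfold Rdiv. apply contR_mult; [|apply continuous_const].
  apply contR_mult.
  - apply (continuous_ext (fun u => (-1) * (w u * u))). intros; toR; ring.
    apply contR_mult. apply continuous_const. apply contR_mult. apply Hw. apply continuous_id.
  - apply continuous_exp_comp. apply (contR_of_der _ (fun u => - (1 + a^2) * u)).
    intros. auto_derive. easy. toR. field.
Qed.

Lemma I1 a B : RInt (fun u => Ef (fun _ => 1) a u) 0 B =
  (exp (- (1 + a^2) * B^2 / 2) - 1) / ((1 + a^2) * (2 * PI)).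
Proof.
  assert (0 < 1 + a^2) by nra. pose proof PI_pos2.
  rewrite (RInt_FTC (fun u => exp (- (1 + a^2) * u^2 / 2) / ((1 + a^2) * (2 * PI)))).
  - replace (exp (- (1 + a^2) * 0^2 / 2)) with 1 by (rewrite <- exp_0; f_equal; field).
    toR. field. lra.
  - intros t. unfold Ef. auto_derive. sidec. fsimpl.
  - intros t0. apply Ef_cont1. intros; apply continuous_const.
Qed.

Lemma I3 a B : RInt (fun u => Ef (fun u => u^2) a u) 0 B =
  ((B^2 / (1 + a^2) + 2 / (1 + a^2)^2) * exp (- (1 + a^2) * B^2 / 2) - 2 / (1 + a^2)^2) / (2 * PI).
Proof.
  assert (0 < 1 + a^2) by nra. pose proof PI_pos2.
  rewrite (RInt_FTC (fun u => (u^2 / (1 + a^2) + 2 / (1 + a^2)^2) * exp (- (1 + a^2) * u^2 / 2) / (2 * PI))).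
  - replace (exp (- (1 + a^2) * 0^2 / 2)) with 1 by (rewrite <- exp_0; f_equal; field).
    toR. field. lra.
  - intros t. unfold Ef. auto_derive. sidec. fsimpl.
  - intros t0. apply Ef_cont1. intros. apply (contR_of_der _ (fun u => 2 * u)). intros; auto_derive; [easy|toR; ring].
Qed.

Lemma mvtA f df a b : a < b -> (forall t, is_derive f t (df t)) ->
  exists c, a <= c <= b /\ f b - f a = df c * (b - a).
Proof.
  intros Hab H. destruct (MVT_gen f a b df) as [c [Hc E]].
  - intros; apply H.
  - intros. apply continuity_pt_filterlim. eapply contR_of_der; eauto.
  - rewrite Rmin_left, Rmax_right in Hc by lra. eauto.
Qed.

Definition Aw (w : R -> R) a B := RInt (fun u => w u * Phi (- (a * u)) * phi u) 0 B.

Lemma atan_derA a : is_derive atan a (/ (1 + a^2)).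
Proof. replace (a^2) with (a²) by (unfold Rsqr; ring). apply is_derive_atan. Qed.

Lemma w1_2d x y : continuity_2d_pt (fun _ v : R => 1) x y.
Proof. apply continuity_2d_pt_const. Qed.
Lemma w1_1d x : continuous (fun _ : R => 1) x.
Proof. apply continuous_const. Qed.
Lemma w2_2d x y : continuity_2d_pt (fun _ v : R => v^2) x y.
Proof. apply (continuity_2d_pt_ext (fun _ v => v * v)). intros; ring. c2d. Qed.
Lemma w2_1d x : continuous (fun v : R => v^2) x.
Proof. apply (contR_of_der _ (fun u => 2 * u)). intros; auto_derive; [easy|toR; ring]. Qed.

Lemma R0_der B t : is_derive (fun t => Aw (fun _ => 1) t B + atan t / (2 * PI)) t
  (exp (- (1 + t^2) * B^2 / 2) / ((1 + t^2) * (2 * PI))).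
Proof.
  assert (0 < 1 + t^2) by nra. pose proof PI_pos2.
  pose proof (Aparam_der (fun _ => 1) w1_2d w1_1d B t) as H1.
  rewrite I1 in H1.
  pose proof (is_derive_scal _ t (/ (2 * PI)) _ (atan_derA t)) as H2.
  pose proof (is_derive_plus _ _ _ _ _ H1 H2) as H3.
  eapply is_derive_eq; [apply H3| |].
  - intros; unfold Aw, plus; simpl. toR. field. lra.
  - unfold plus; simpl. toR. field. lra.
Qed.

Lemma R2_der B t : is_derive (fun t => Aw (fun u => u^2) t B + (atan t + t / (1 + t^2)) / (2 * PI)) t
  ((B^2 / (1 + t^2) + 2 / (1 + t^2)^2) * exp (- (1 + t^2) * B^2 / 2) / (2 * PI)).
Proof.
  assert (0 < 1 + t^2) by nra. pose proof PI_pos2.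
  pose proof (Aparam_der (fun u => u^2) w2_2d w2_1d B t) as H1.
  rewrite I3 in H1.
  assert (H4 : is_derive (fun t => t / (1 + t^2)) t ((1 - t^2) / (1 + t^2)^2)).
  { auto_derive. sidec. fsimpl. }
  pose proof (is_derive_scal _ t (/ (2 * PI)) _ (is_derive_plus _ _ _ _ _ (atan_derA t) H4)) as H2.
  pose proof (is_derive_plus _ _ _ _ _ H1 H2) as H3.
  eapply is_derive_eq; [apply H3| |].
  - intros x; unfold Aw, plus; simpl. toR. assert (0 < 1 + x^2) by nra. field. lra.
  - unfold plus; simpl. toR. field. lra.
Qed.

Lemma exp_mono_neg B c : 0 < B -> exp (- (1 + c^2) * B^2 / 2) <= exp (- B^2 / 2).
Proof. intros HB. apply exp_le. pose proof (pow2_ge_0 c). pose proof (pow2_ge_0 B). nra. Qed.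

Lemma R0_diff B a b : 0 < B -> a < b ->
  Rabs ((Aw (fun _ => 1) b B + atan b / (2 * PI)) - (Aw (fun _ => 1) a B + atan a / (2 * PI)))
  <= (b - a) * exp (- B^2 / 2).
Proof.
  intros HB Hab. destruct (mvtA _ _ a b Hab (R0_der B)) as [c [Hc E]].
  rewrite E. pose proof PI_pos2. assert (0 < 1 + c^2) by nra.
  pose proof (exp_mono_neg B c HB). pose proof (exp_pos (- (1 + c^2) * B^2 / 2)).
  assert (1 <= (1 + c^2) * (2 * PI)) by (pose proof PI2_3_2; nra).
  assert (0 < exp (- (1 + c ^ 2) * B ^ 2 / 2) / ((1 + c ^ 2) * (2 * PI))) by (apply Rdiv_lt_0_compat; lra).
  assert (exp (- (1 + c ^ 2) * B ^ 2 / 2) / ((1 + c ^ 2) * (2 * PI)) <= exp (- B^2 / 2)).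
  { apply Rle_div_l. lra. nra. }
  rewrite Rabs_pos_eq by nra. nra.
Qed.

Lemma R2_diff B a b : 0 < B -> a < b ->
  Rabs ((Aw (fun u => u^2) b B + (atan b + b / (1 + b^2)) / (2 * PI))
       - (Aw (fun u => u^2) a B + (atan a + a / (1 + a^2)) / (2 * PI)))
  <= (b - a) * ((B^2 + 2) * exp (- B^2 / 2)).
Proof.
  intros HB Hab. destruct (mvtA _ _ a b Hab (R2_der B)) as [c [Hc E]].
  rewrite E. pose proof PI_pos2. assert (0 < 1 + c^2) by nra.
  pose proof (exp_mono_neg B c HB). pose proof (exp_pos (- (1 + c^2) * B^2 / 2)).
  set (e := exp (- (1 + c ^ 2) * B ^ 2 / 2)) in *.
  assert (Hq : 0 <= B^2 / (1 + c^2) + 2 / (1 + c^2)^2 <= B^2 + 2).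
  { assert (0 < (1 + c^2)^2) by (apply pow_lt; lra).
    pose proof (pow2_ge_0 B). pose proof (pow2_ge_0 c).
    split. apply Rplus_le_le_0_compat; apply Rdiv_le_0_compat; lra.
    apply Rplus_le_compat.
    apply Rle_div_l; nra.
    apply Rle_div_l; nra. }
  assert (1 <= 2 * PI) by (pose proof PI2_3_2; nra).
  assert (0 <= (B ^ 2 / (1 + c ^ 2) + 2 / (1 + c ^ 2) ^ 2) * e / (2 * PI)).
  { apply Rdiv_le_0_compat; nra. }
  assert ((B ^ 2 / (1 + c ^ 2) + 2 / (1 + c ^ 2) ^ 2) * e / (2 * PI) <= (B^2 + 2) * exp (- B^2 / 2)).
  { apply Rle_div_l. lra.
    assert ((B ^ 2 / (1 + c ^ 2) + 2 / (1 + c ^ 2) ^ 2) * e <= (B^2 + 2) * exp (- B^2 / 2)) by (apply Rmult_le_compat; lra).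
    assert (0 <= (B^2 + 2) * exp (- B^2 / 2)) by (pose proof (pow2_ge_0 B); pose proof (exp_pos (- B^2/2)); nra).
    nra. }
  rewrite Rabs_pos_eq by nra. nra.
Qed.

Lemma expB_RInt B : 0 < B -> RInt (fun u => exp (- (B * u))) 0 B = (1 - exp (- (B * B))) / B.
Proof.
  intros HB. rewrite (RInt_FTC (fun u => - exp (- (B * u)) / B)).
  - replace (- (B * 0)) with 0 by ring. rewrite exp_0. toR. field. lra.
  - intros t. auto_derive. sidec. fsimpl.
  - intros t. apply continuous_exp_comp. apply (contR_of_der _ (fun _ => - B)).
    intros; auto_derive; [easy|toR; ring].
Qed.

Lemma A_small (w : R -> R) (Hw1 : forall x, continuous w x) B : 0 < B ->
  (forall u, 0 <= u -> Rabs (w u * phi u) <= 1) -> Rabs (Aw w B B) <= 1 / B.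
Proof.
  intros HB Hb. unfold Aw.
  assert (Hf : ex_RInt (fun u => w u * Phi (- (B * u)) * phi u) 0 B).
  { apply ex_RInt_contR. intros z _. apply contR_mult. apply contR_mult. apply Hw1.
    apply (continuous_comp (fun z => - (B * z)) Phi).
    apply (contR_of_der _ (fun _ => - B)). intros; auto_derive; [easy|toR; ring].
    apply Phi_cont. apply phi_cont. }
  assert (Hg : ex_RInt (fun u => exp (- (B * u))) 0 B).
  { apply ex_RInt_contR. intros z _. apply continuous_exp_comp. apply (contR_of_der _ (fun _ => - B)).
    intros; auto_derive; [easy|toR; ring]. }
  assert (Hpt : forall u, 0 < u < B -> Rabs (w u * Phi (- (B * u)) * phi u) <= exp (- (B * u))).
  { intros u Hu. replace (w u * Phi (- (B * u)) * phi u) with ((w u * phi u) * Phi (- (B * u))) by ring.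
    rewrite Rabs_mult. pose proof (Hb u ltac:(lra)). pose proof (Phi_abs (- (B * u))).
    pose proof (Rabs_pos (w u * phi u)). pose proof (Rabs_pos (Phi (- (B * u)))). nra. }
  assert (H1 : RInt (fun u => w u * Phi (- (B * u)) * phi u) 0 B <= RInt (fun u => exp (- (B * u))) 0 B).
  { apply RInt_le; auto. lra. intros u Hu. pose proof (Hpt u Hu). apply Rabs_le_between in H. lra. }
  assert (H2 : RInt (fun u => - exp (- (B * u))) 0 B <= RInt (fun u => w u * Phi (- (B * u)) * phi u) 0 B).
  { apply RInt_le; auto. lra. apply ex_RInt_opp in Hg. apply Hg.
    intros u Hu. pose proof (Hpt u Hu). apply Rabs_le_between in H. lra. }
  rewrite (RInt_opp (V:=R_CompleteNormedModule)) in H2 by auto. unfold opp in H2; simpl in H2.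
  rewrite expB_RInt in H1, H2 by auto.
  pose proof (exp_pos (- (B * B))).
  assert ((1 - exp (- (B * B))) / B <= 1 / B) by (apply Rmult_le_compat_r; [left; apply Rinv_0_lt_compat; lra| lra]).
  assert (0 <= (1 - exp (- (B * B))) / B).
  { apply Rdiv_le_0_compat; auto. assert (Hx := exp_le (- (B * B)) 0 ltac:(nra)). rewrite exp_0 in Hx. lra. }
  apply Rabs_le. lra.
Qed.


Lemma gen_from_bound (f : R -> R) L C B0 : 0 < B0 ->
  (forall B, B0 <= B -> ex_RInt f 0 B) ->
  (forall B, B0 <= B -> Rabs (RInt f 0 B - L) <= C / B) ->
  is_RInt_gen f (at_point 0) (Rbar_locally p_infty) L.
Proof.
  intros HB0 Hex Hb P [eps HP].
  pose proof (cond_pos eps).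
  apply (Filter_prod _ _ _ (fun a => a = 0) (fun b => B0 + Rabs C / eps < b)).
  - reflexivity.
  - exists (B0 + Rabs C / eps). auto.
  - intros a b Ha Hbb. simpl. subst a.
    assert (0 <= Rabs C / eps) by (apply Rdiv_le_0_compat; [apply Rabs_pos|lra]).
    exists (RInt f 0 b). split. apply RInt_correctR, Hex. lra.
    apply HP. apply ballR.
    eapply Rle_lt_trans. apply Hb. lra.
    assert (0 < b) by lra.
    apply Rle_lt_trans with (Rabs C / b).
    apply Rmult_le_compat_r. left; apply Rinv_0_lt_compat; lra. apply RRle_abs.
    apply Rlt_div_l. lra.
    assert (Rabs C < eps * (b - B0)).
    { assert (Rabs C / eps < b - B0) by lra. assert (Rabs C = Rabs C / eps * eps) by (field; lra). nra. }
    nra.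
Qed.

Lemma atan_inv_small B : 0 < B -> 0 <= PI / 2 - atan B <= / B.
Proof.
  intros HB. rewrite <- atan_inv by auto.
  pose proof (Rinv_0_lt_compat B HB). split.
  - rewrite <- atan_0. left. apply atan_increasing. auto.
  - pose proof (atan_up 0 (/ B) ltac:(lra)). simpl in H0. lra.
Qed.

Lemma exp_neg_mul y : exp (- y) * exp y = 1.
Proof. rewrite <- exp_plus. replace (- y + y) with 0 by ring. apply exp_0. Qed.

Lemma Bexp_bound B : 0 < B -> B * exp (- B^2 / 2) <= 2 / B.
Proof.
  intros HB. pose proof (exp_ineq1_le (B^2 / 2)).
  pose proof (exp_neg_mul (B^2 / 2)). replace (- (B^2 / 2)) with (- B^2 / 2) in H0 by field.
  pose proof (exp_pos (- B^2/2)).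
  assert (B^2 * exp (- B^2/2) <= 2).
  { assert (0 <= exp (- B^2/2) * (exp (B^2/2) - 1 - B^2/2)) by (apply Rmult_le_pos; lra). nra. }
  replace (B * exp (- B ^ 2 / 2)) with ((B^2 * exp (- B^2/2)) / B) by (field; lra).
  apply Rmult_le_compat_r; [left; apply Rinv_0_lt_compat|]; lra.
Qed.

Lemma B3exp_bound B : 0 < B -> B * (B^2 + 2) * exp (- B^2 / 2) <= 12 / B.
Proof.
  intros HB. pose proof (exp_ineq1_le (B^2 / 6)).
  assert (E3 : exp (B^2/2) = exp (B^2/6) * exp (B^2/6) * exp (B^2/6)).
  { rewrite <- !exp_plus. f_equal. field. }
  assert (0 <= 1 + B^2/6) by (pose proof (pow2_ge_0 B); lra).
  assert (Hc : (1 + B^2/6)^3 <= exp (B^2/2)).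
  { rewrite E3. replace ((1 + B^2/6)^3) with ((1+B^2/6)*(1+B^2/6)*(1+B^2/6)) by ring.
    apply Rmult_le_compat; try nra. }
  assert (Hm := exp_neg_mul (B^2 / 2)). replace (- (B^2 / 2)) with (- B^2 / 2) in Hm by field.
  pose proof (exp_pos (- B^2/2)).
  assert (B^2 * (B^2 + 2) <= 12 * exp (B^2/2)).
  { pose proof (pow2_ge_0 B). nra. }
  assert (0 <= exp (- B^2/2) * (12 * exp (B^2/2) - B^2 * (B^2 + 2))) by (apply Rmult_le_pos; lra).
  replace (B * (B ^ 2 + 2) * exp (- B ^ 2 / 2)) with ((B^2 * (B^2 + 2) * exp (- B^2/2)) / B) by (field; lra).
  apply Rmult_le_compat_r; [left; apply Rinv_0_lt_compat|]; nra.
Qed.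

Lemma tri3 x y z : Rabs (x - y - z) <= Rabs x + Rabs y + Rabs z.
Proof.
  unfold Rminus. eapply Rle_trans. apply Rabs_triang. rewrite Rabs_Ropp.
  apply Rplus_le_compat_r. eapply Rle_trans. apply Rabs_triang. rewrite Rabs_Ropp. lra.
Qed.

Definition L0 a := (PI / 2 - atan a) / (2 * PI).
Definition L2 a := (PI / 2 - atan a - a / (1 + a^2)) / (2 * PI).

Lemma A1_bound a B : 0 < a -> a + 1 <= B -> Rabs (Aw (fun _ => 1) a B - L0 a) <= 4 / B.
Proof.
  intros Ha HB.
  pose proof PI_pos2. assert (1 <= 2 * PI) by (pose proof PI2_3_2; lra).
  pose proof (R0_diff B a B ltac:(lra) ltac:(lra)) as H1.
  pose proof (A_small (fun _ => 1) w1_1d B ltac:(lra)) as H2.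
  assert (H2' : Rabs (Aw (fun _ => 1) B B) <= 1 / B).
  { apply H2. intros u _. rewrite Rmult_1_l, Rabs_pos_eq. apply phi_le1. left; apply phi_pos. }
  pose proof (atan_inv_small B ltac:(lra)) as H3.
  pose proof (Bexp_bound B ltac:(lra)) as H4.
  set (e := exp (- B^2/2)) in *. pose proof (exp_pos (- B^2/2)) as He. fold e in He.
  assert (E : Aw (fun _ => 1) a B - L0 a =
     Aw (fun _ => 1) B B - (PI/2 - atan B) / (2 * PI)
     - ((Aw (fun _ => 1) B B + atan B / (2 * PI)) - (Aw (fun _ => 1) a B + atan a / (2 * PI)))).
  { unfold L0. field. lra. }
  rewrite E.
  assert (Hq : 0 <= (PI/2 - atan B) / (2 * PI) <= / B).
  { split. apply Rdiv_le_0_compat; lra. apply Rle_div_l. lra.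
    assert (0 < / B) by (apply Rinv_0_lt_compat; lra). nra. }
  assert ((B - a) * e <= B * e) by nra.
  assert (/ B = 1 / B) by (field; lra).
  unfold Rminus at 1. eapply Rle_trans. apply Rabs_triang. rewrite Rabs_Ropp.
  eapply Rle_trans. apply Rplus_le_compat_r. unfold Rminus. apply Rabs_triang.
  rewrite Rabs_Ropp. rewrite (Rabs_pos_eq ((PI / 2 + - atan B) / (2 * PI))) by (unfold Rminus in Hq; lra). unfold Rminus in Hq.
  replace (4 / B) with (1 / B + 1 / B + 2 / B) by (field; lra). lra.
Qed.

Lemma A2_bound a B : 0 < a -> a + 1 <= B -> Rabs (Aw (fun u => u^2) a B - L2 a) <= 15 / B.
Proof.
  intros Ha HB.
  pose proof PI_pos2. assert (1 <= 2 * PI) by (pose proof PI2_3_2; lra).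
  pose proof (R2_diff B a B ltac:(lra) ltac:(lra)) as H1.
  pose proof (A_small (fun u => u^2) w2_1d B ltac:(lra)) as H2.
  assert (H2' : Rabs (Aw (fun u => u^2) B B) <= 1 / B).
  { apply H2. intros u _. rewrite Rabs_pos_eq. apply u2phi_le1.
    apply Rmult_le_pos. apply pow2_ge_0. left; apply phi_pos. }
  pose proof (atan_inv_small B ltac:(lra)) as H3.
  pose proof (B3exp_bound B ltac:(lra)) as H4.
  set (e := exp (- B^2/2)) in *. pose proof (exp_pos (- B^2/2)) as He. fold e in He.
  assert (0 < 1 + B^2) by nra.
  assert (Hb2 : 0 <= B / (1 + B^2) <= / B).
  { split. apply Rdiv_le_0_compat; lra. apply Rle_div_l. lra.
    replace (/ B * (1 + B^2)) with (/ B + B) by (field; lra).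
    assert (0 < / B) by (apply Rinv_0_lt_compat; lra). lra. }
  assert (E : Aw (fun u => u^2) a B - L2 a =
     Aw (fun u => u^2) B B - (PI/2 - atan B - B / (1 + B^2)) / (2 * PI)
     - ((Aw (fun u => u^2) B B + (atan B + B / (1 + B^2)) / (2 * PI))
       - (Aw (fun u => u^2) a B + (atan a + a / (1 + a^2)) / (2 * PI)))).
  { unfold L2. field. split; nra. }
  rewrite E.
  assert (Hq : Rabs ((PI/2 - atan B - B / (1 + B^2)) / (2 * PI)) <= 2 / B).
  { unfold Rdiv at 1. rewrite Rabs_mult. rewrite (Rabs_pos_eq (/ (2 * PI))) by (left; apply Rinv_0_lt_compat; lra).
    assert (Rabs (PI / 2 - atan B - B / (1 + B ^ 2)) <= 2 / B).
    { apply Rabs_le. replace (2 / B) with (/ B + / B) by (field; lra). lra. }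
    assert (/ (2 * PI) <= 1). { replace 1 with (/ 1) by field. apply Rinv_le_contravar; lra. }
    pose proof (Rabs_pos (PI / 2 - atan B - B / (1 + B ^ 2))).
    assert (0 < / (2 * PI)) by (apply Rinv_0_lt_compat; lra).
    nra. }
  assert ((B - a) * ((B^2 + 2) * e) <= B * (B^2 + 2) * e).
  { pose proof (pow2_ge_0 B). assert (0 <= (B^2 + 2) * e) by nra. nra. }
  eapply Rle_trans. apply tri3.
  replace (15 / B) with (1 / B + 2 / B + 12 / B) by (field; lra). lra.
Qed.

Lemma Aw_ex (w : R -> R) (Hw1 : forall x, continuous w x) a B :
  ex_RInt (fun u => w u * Phi (- (a * u)) * phi u) 0 B.
Proof.
  apply ex_RInt_contR. intros z _. apply contR_mult. apply contR_mult. apply Hw1.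
  apply (continuous_comp (fun z => - (a * z)) Phi).
  apply (contR_of_der _ (fun _ => - a)). intros; auto_derive; [easy|toR; ring].
  apply Phi_cont. apply phi_cont.
Qed.

Lemma J0_is a : 0 < a ->
  is_RInt_gen (fun u => 1 * Phi (- (a * u)) * phi u) (at_point 0) (Rbar_locally p_infty) (L0 a).
Proof.
  intros Ha. apply (gen_from_bound _ _ 4 (a + 1)). lra.
  intros; apply Aw_ex, w1_1d.
  intros B HB. apply A1_bound; auto.
Qed.

Lemma J2_is a : 0 < a ->
  is_RInt_gen (fun u => u^2 * Phi (- (a * u)) * phi u) (at_point 0) (Rbar_locally p_infty) (L2 a).
Proof.
  intros Ha. apply (gen_from_bound _ _ 15 (a + 1)). lra.
  intros; apply Aw_ex, w2_1d.
  intros B HB. apply A2_bound; auto.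
Qed.

Lemma alpha_closed I xi l : 0 < l * xi * sqrt I ->
  alpha_acc I xi l = 4 * L0 (l * xi * sqrt I / 2).
Proof.
  intros H. unfold alpha_acc. f_equal.
  apply (@is_RInt_gen_unique R_CompleteNormedModule); try apply _.
  apply (is_RInt_gen_ext (fun u => 1 * Phi (- ((l * xi * sqrt I / 2) * u)) * phi u)).
  - apply filter_forall. intros ab x _. toR. rewrite Rmult_1_l. do 2 f_equal. field.
  - apply J0_is. lra.
Qed.

Lemma g_closed I xi l : 0 < l * xi * sqrt I ->
  g_speed I xi l = 4 * l^2 * L2 (l * xi * sqrt I / 2).
Proof.
  intros H. unfold g_speed. f_equal.
  apply (@is_RInt_gen_unique R_CompleteNormedModule); try apply _.
  apply (is_RInt_gen_ext (fun u => u^2 * Phi (- ((l * xi * sqrt I / 2) * u)) * phi u)).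
  - apply filter_forall. intros ab x _. toR. do 3 f_equal. field.
  - apply J2_is. lra.
Qed.


Definition Pf (a : R) := PI/2 - atan a - a / (1 + a^2).
Definition kf (a : R) := a^2 * Pf a.
Definition mf (a : R) := PI/2 - atan a - a / (1 + a^2) - a / (1 + a^2)^2.

Lemma atan_der a : is_derive atan a (/ (1 + a^2)).
Proof. replace (a^2) with (a²) by (unfold Rsqr; ring). apply is_derive_atan. Qed.

Lemma mf_der a : is_derive mf a (- (3 - a^2) / (1 + a^2)^3).
Proof.
  assert (H1 : 0 < 1 + a^2) by (pose proof (pow2_ge_0 a); lra).
  assert (Hr : is_derive (fun a => PI/2 - a / (1 + a^2) - a / (1 + a^2)^2) a
     (- (1 - a^2) / (1 + a^2)^2 - (1 - 3 * a^2) / (1 + a^2)^3)).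
  { auto_derive. sidec. field. lra. }
  pose proof (is_derive_minus _ _ _ _ _ Hr (atan_der a)) as H.
  eapply is_derive_eq; [apply H| |].
  - intros t; unfold mf, minus, plus, opp; simpl. ring.
  - unfold minus, plus, opp; simpl. field. lra.
Qed.

Lemma kf_der a : is_derive kf a (2 * a * mf a).
Proof.
  assert (H1 : 0 < 1 + a^2) by (pose proof (pow2_ge_0 a); lra).
  assert (Hr : is_derive (fun a => a^2 * (PI/2) - a^3 / (1 + a^2)) a
     (2 * a * (PI/2) - (3 * a^2 * (1 + a^2) - a^3 * (2 * a)) / (1 + a^2)^2)).
  { auto_derive. sidec. field. lra. }
  assert (Ha : is_derive (fun a => a^2 * atan a) a (2 * a * atan a + a^2 / (1 + a^2))).
  { assert (Hp : is_derive (fun a : R => a^2) a (2 * a)) by (auto_derive; [easy|ring]).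
    pose proof (is_derive_mult _ _ _ _ _ Hp (atan_der a)) as H.
    eapply is_derive_eq; [apply H; intros; apply Rmult_comm| |].
    - intros; reflexivity.
    - unfold plus, mult; simpl. field. lra. }
  pose proof (is_derive_minus _ _ _ _ _ Hr Ha) as H.
  eapply is_derive_eq; [apply H| |].
  - intros t; unfold kf, Pf, minus, plus, opp; simpl.
    assert (0 < 1 + t^2) by (pose proof (pow2_ge_0 t); lra). field. lra.
  - unfold mf, minus, plus, opp; simpl. field. lra.
Qed.

Lemma cont_of_der f df x : (forall t, is_derive f t (df t)) -> continuity_pt f x.
Proof.
  intros H. apply continuity_pt_filterlim. apply (ex_derive_continuous f). eexists; apply H.
Qed.

Lemma mvt f df a b : a < b -> (forall t, is_derive f t (df t)) ->
  exists c, a <= c <= b /\ f b - f a = df c * (b - a).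
Proof.
  intros Hab H. destruct (MVT_gen f a b df) as [c [Hc E]].
  - intros; apply H.
  - intros; eapply cont_of_der; eauto.
  - rewrite Rmin_left, Rmax_right in Hc by lra. eauto.
Qed.

Definition alo := 2000 / 1649.
Definition ahi := 12500 / 10303.

Lemma mf_inv a : 0 < a -> mf a = atan (/a) - (/a) / (1 + (/a)^2) - (/a)^3 / (1 + (/a)^2)^2.
Proof.
  intros Ha. unfold mf. rewrite atan_inv by lra.
  assert (0 < 1 + a^2) by nra. field. split; lra.
Qed.

Lemma mf_alo : 0 < mf alo.
Proof.
  rewrite mf_inv by (unfold alo; lra).
  replace (/ alo) with xl by (unfold alo, xl; field). apply mu_xl.
Qed.

Lemma mf_ahi : mf ahi < 0.
Proof.
  rewrite mf_inv by (unfold ahi; lra).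
  replace (/ ahi) with xh by (unfold ahi, xh; field). apply mu_xh.
Qed.

Lemma mf_decr a b : 0 <= a < b -> b <= 17/10 -> mf b < mf a.
Proof.
  intros Hab Hb. destruct (mvt mf _ a b ltac:(lra) mf_der) as [c [Hc E]].
  assert (0 < 1 + c^2) by nra.
  assert (0 < (3 - c^2) / (1 + c^2)^3).
  { apply Rdiv_lt_0_compat. nra. apply pow_lt; lra. }
  assert (- (3 - c ^ 2) / (1 + c ^ 2) ^ 3 = - ((3 - c ^ 2) / (1 + c ^ 2) ^ 3)) by (field; lra).
  nra.
Qed.

Lemma mf_pos a : 0 < a <= alo -> 0 < mf a.
Proof.
  intros Ha. destruct (Req_dec a alo). subst; apply mf_alo.
  pose proof (mf_decr a alo ltac:(lra) ltac:(unfold alo; lra)). pose proof mf_alo. lra.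
Qed.

Lemma mf_tail a : 17/10 <= a -> mf a < 0.
Proof.
  intros Ha. rewrite mf_inv by lra.
  set (x := / a).
  assert (Hx : 0 < x <= 10/17).
  { unfold x. split. apply Rinv_0_lt_compat; lra.
    replace (10/17) with (/ (17/10)) by field. apply Rinv_le_contravar; lra. }
  pose proof (atan_up 1 x ltac:(lra)).
  assert (0 < 1 + x^2) by nra.
  assert (E : x - x^3/3 + x^5/5 - x / (1 + x ^ 2) - x ^ 3 / (1 + x ^ 2) ^ 2
     = x^3 * ((x^2 * 15 - 5 * (1 + x^2)^2 + 3 * x^2 * (1 + x^2)^2) / (15 * (1 + x^2)^2))).
  { field. lra. }
  assert (x^3 * ((x^2 * 15 - 5 * (1 + x^2)^2 + 3 * x^2 * (1 + x^2)^2) / (15 * (1 + x^2)^2)) < 0).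
  { assert (0 < x^3) by (apply pow_lt; lra).
    assert (x^2 * 15 - 5 * (1 + x^2)^2 + 3 * x^2 * (1 + x^2)^2 < 0).
    { assert (y2 : x^2 <= 100/289) by nra. set (y := x^2) in *.
      assert (0 <= y) by (unfold y; nra). nra. }
    assert (0 < 15 * (1 + x^2)^2) by nra.
    assert (((x^2 * 15 - 5 * (1 + x^2)^2 + 3 * x^2 * (1 + x^2)^2) / (15 * (1 + x^2)^2)) < 0).
    { apply Rdiv_neg_pos; lra. }
    nra. }
  assert (Hs : atS (2 * 1) x = x - x^3/3 + x^5/5) by (simpl; field).
  lra.
Qed.

Lemma mf_neg a : ahi <= a -> mf a < 0.
Proof.
  intros Ha. destruct (Rle_lt_dec a (17/10)).
  - destruct (Req_dec a ahi). subst; apply mf_ahi.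
    pose proof (mf_decr ahi a ltac:(unfold ahi in *; lra) r). pose proof mf_ahi. lra.
  - apply mf_tail; lra.
Qed.

Lemma kf_incr a b : 0 < a < b -> b <= alo -> kf a < kf b.
Proof.
  intros Hab Hb. destruct (mvt kf _ a b ltac:(lra) kf_der) as [c [Hc E]].
  pose proof (mf_pos c ltac:(lra)).
  assert (0 < 2 * c * mf c * (b - a)) by (repeat apply Rmult_lt_0_compat; lra). lra.
Qed.

Lemma kf_decr a b : ahi <= a < b -> kf b < kf a.
Proof.
  intros Hab. destruct (mvt kf _ a b ltac:(lra) kf_der) as [c [Hc E]].
  pose proof (mf_neg c ltac:(lra)). assert (0 < c) by (unfold ahi in *; lra).
  assert (0 < 2 * c * (- mf c) * (b - a)) by (repeat apply Rmult_lt_0_compat; lra). lra.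
Qed.

Lemma kf_max_exists : exists a, 0 < a /\ forall b, 0 < b -> kf b <= kf a.
Proof.
  destruct (continuity_ab_maj kf alo ahi ltac:(unfold alo, ahi; lra)) as [M [HM HMr]].
  { intros c _. eapply cont_of_der. apply kf_der. }
  exists M. split. unfold alo in *; lra.
  intros b Hb. destruct (Rlt_le_dec b alo).
  - pose proof (kf_incr b alo ltac:(lra) ltac:(lra)).
    pose proof (HM alo ltac:(unfold alo, ahi; lra)). lra.
  - destruct (Rle_lt_dec b ahi).
    + apply HM; lra.
    + pose proof (kf_decr ahi b ltac:(lra)).
      pose proof (HM ahi ltac:(unfold alo, ahi; lra)). lra.
Qed.

Lemma kf_max_loc a : 0 < a -> (forall b, 0 < b -> kf b <= kf a) -> alo <= a <= ahi.
Proof.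
  intros Ha H. split.
  - destruct (Rlt_le_dec a alo); auto.
    pose proof (kf_incr a alo ltac:(lra) ltac:(lra)). pose proof (H alo ltac:(unfold alo; lra)). lra.
  - destruct (Rle_lt_dec a ahi); auto.
    pose proof (kf_decr ahi a ltac:(lra)). pose proof (H ahi ltac:(unfold ahi; lra)). lra.
Qed.

Lemma g_kf I xi l : 0 < I -> 0 < xi -> 0 < l ->
  g_speed I xi l = 8 / (PI * (xi * sqrt I)^2) * kf (l * (xi * sqrt I) / 2).
Proof.
  intros HI Hxi Hl. assert (0 < sqrt I) by (apply sqrt_lt_R0; auto).
  assert (0 < xi * sqrt I) by nra. pose proof PI_RGT_0.
  rewrite g_closed by (rewrite Rmult_assoc; nra).
  unfold L2, kf, Pf. replace (l * xi * sqrt I / 2) with (l * (xi * sqrt I) / 2) by field.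
  field. repeat split; nra.
Qed.

Theorem corollary3 (I xi : R) (hI : 0 < I) (hxi : 0 < xi) :
  (exists lopt, is_max_speed I xi lopt) /\
  (forall lopt, is_max_speed I xi lopt ->
     Rabs (lopt * xi * sqrt I - 2426 / 1000) <= 5 / 10000 /\
     Rabs (alpha_acc I xi lopt - 439 / 1000) <= 5 / 10000).
Proof.
  assert (Hs : 0 < sqrt I) by (apply sqrt_lt_R0; auto).
  set (s := xi * sqrt I).
  assert (Hs' : 0 < s) by (unfold s; nra).
  pose proof PI_RGT_0.
  assert (HK : 0 < 8 / (PI * s^2)).
  { apply Rdiv_lt_0_compat. lra. apply Rmult_lt_0_compat; auto. apply pow_lt; auto. }
  split.
  - destruct kf_max_exists as [a [Ha Hmax]].
    exists (2 * a / s). split. apply Rdiv_lt_0_compat; lra.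
    intros l' Hl'. rewrite !g_kf by (auto; apply Rdiv_lt_0_compat; lra). fold s.
    replace (2 * a / s * s / 2) with a by (field; lra).
    apply Rmult_le_compat_l. lra. apply Hmax.
    apply Rdiv_lt_0_compat. nra. lra.
  - intros l [Hl Hmax].
    set (a := l * s / 2).
    assert (Ha : 0 < a) by (unfold a; apply Rdiv_lt_0_compat; nra).
    assert (Hloc : alo <= a <= ahi).
    { apply kf_max_loc; auto. intros b Hb.
      pose proof (Hmax (2 * b / s) ltac:(apply Rdiv_lt_0_compat; lra)) as H1.
      rewrite !g_kf in H1 by (auto; apply Rdiv_lt_0_compat; lra). fold s in H1.
      replace (2 * b / s * s / 2) with b in H1 by (field; lra).
      fold a in H1. apply Rmult_le_reg_l in H1; auto. }
    assert (E1 : l * xi * sqrt I = 2 * a) by (unfold a, s; field).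
    split.
    + rewrite E1. unfold alo, ahi in Hloc. apply Rabs_le. lra.
    + rewrite alpha_closed by (rewrite E1; lra).
      replace (l * xi * sqrt I / 2) with a by (rewrite E1; field).
      unfold L0. rewrite <- atan_inv by auto.
      assert (Hx : xh <= / a <= xl).
      { unfold alo, ahi in Hloc. split.
        replace xh with (/ (12500 / 10303)) by (unfold xh; field).
        apply Rinv_le_contravar; lra.
        replace xl with (/ (2000 / 1649)) by (unfold xl; field).
        apply Rinv_le_contravar; lra. }
      assert (T1 : atan xh <= atan (/ a)).
      { destruct (Req_dec xh (/ a)). rewrite H0; lra. left; apply atan_increasing; lra. }
      assert (T2 : atan (/ a) <= atan xl).
      { destruct (Req_dec xl (/ a)). rewrite H0; lra. left; apply atan_increasing; lra. }
      pose proof atan_xh_lo. pose proof atan_xl_hi. pose proof PI_lo. pose proof PI_hi.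
      set (t := atan (/ a)) in *.
      replace (4 * (t / (2 * PI))) with (2 * t / PI) by (field; lra).
      set (q := 2 * t / PI).
      assert (Eq : 2 * t = q * PI) by (unfold q; field; lra).
      assert (q >= 4385 / 10000).
      { destruct (Rlt_le_dec q (4385 / 10000)); [|lra].
        assert (q * PI < 4385 / 10000 * PI) by (apply Rmult_lt_compat_r; lra). lra. }
      assert (q <= 4395 / 10000).
      { destruct (Rle_lt_dec q (4395 / 10000)); [lra|].
        assert (4395 / 10000 * PI < q * PI) by (apply Rmult_lt_compat_r; lra). lra. }
      apply Rabs_le. lra.
Qed.
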